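(* Let $\mathbb{F}_q$ have prime characteristic $p$. For every integer $k\ge1$, \[\bigcup_{i=1}^k \{p^j : 0\le j\le t_i\}\,D(q^i-1)\ \subseteq\ P(k,\mathbb{F}_q),\] where $t_i=\min\{t\in\mathbb{Z} : p^t\ge\lfloor k/i\rfloor\}$ for $1\le i\le k$.
   Context: A sequence $(a_n)_{n\ge0}$ over $\mathbb{F}_q$ satisfies a linear recurrence of degree $k$ if there are $c_0,\dots,c_{k-1}\in\mathbb{F}_q$, with $c_0\neq0$ (standing assumption), such that $a_{n+k}=\sum_{i=0}^{k-1}c_ia_{n+i}$ for all $n\ge0$; such sequences are purely periodic and $\rho(\mathbf{a})$ is the least $m>0$ with $a_{n+m}=a_n$ for all $n\ge0$. $P(k,\mathbb{F}_q)$ is the set of all $\rho(\mathbf{a})$ for sequences $\mathbf{a}$ satisfying some linear recurrence of degree $k$ over $\mathbb{F}_q$. For $n\in\mathbb{Z}_{>0}$, $D(n)$ is the set of positive divisors of $n$. For sets $S_1,S_2\subseteq\mathbb{Z}$ and $a\in\mathbb{Z}$, $aS_1=\{ax: x\in S_1\}$ and $S_1S_2=\{xy : x\in S_1, y\in S_2\}$. *)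

(* Defs.v *)
From HB Require Import structures.
From mathcomp Require Import all_boot all_order all_algebra all_field.
Set Implicit Arguments. Unset Strict Implicit. Unset Printing Implicit Defensive.
Import GRing.Theory.
Local Open Scope ring_scope.

Definition lin_rec (F : fieldType) (k : nat) (c : 'I_k -> F) (a : nat -> F) : Prop :=
  forall n : nat, a (n + k)%N = \sum_(i < k) c i * a (n + i)%N.

Definition is_period (F : fieldType) (a : nat -> F) (m : nat) : Prop :=
  (0 < m)%N /\ forall n : nat, a (n + m)%N = a n.

Definition least_period (F : fieldType) (a : nat -> F) (m : nat) : Prop :=
  is_period a m /\ forall m', is_period a m' -> (m <= m')%N.

Definition in_P (k : nat) (F : fieldType) (m : nat) : Prop :=
  exists (c : 'I_k -> F) (a : nat -> F),
    (forall i : 'I_k, nat_of_ord i = 0%N -> c i != 0) /\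
    lin_rec c a /\ least_period a m.

(* Main.v *)
Require Import Defs.
From HB Require Import structures.
From mathcomp Require Import all_boot all_order all_algebra all_field.
From mathcomp Require Import all_solvable.
From mathcomp Require Import zify.
Import GRing.Theory.
Local Open Scope ring_scope.

Lemma aux1 (a b : nat) : (0 < a)%N -> (a < b)%N -> (b.-1 - a + a < b)%N.
Proof. rewrite -!subn1; lia. Qed.
Lemma aux2 (a b : nat) : (0 < a)%N -> (a < b)%N -> b.-2 = (b.-1 - a + a).-1.
Proof. rewrite -!subn1; lia. Qed.

Section Seq.
Variables (F : fieldType) (Q : {poly F}).
Hypothesis Qn0 : Q != 0.

Definition sq (n : nat) : F := (('X^n %% Q)`_(size Q).-2).

Lemma modpB' (a b : {poly F}) : (a - b) %% Q = a %% Q - b %% Q.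
Proof. by rewrite modpD -scaleN1r modpZl scaleN1r. Qed.

Lemma sq_mod n g : (('X^n * g) %% Q)`_(size Q).-2 = \sum_(j < size g) g`_j * sq (n + j).
Proof.
rewrite -{1}[g]coefK poly_def mulr_sumr.
rewrite (big_morph (fun p => p %% Q) (modpD Q) (mod0p Q)) coef_sum.
apply: eq_bigr => j _.
by rewrite -scalerAr -exprD modpZl coefZ.
Qed.

Lemma sq_dvd g : (forall n, (('X^n * g) %% Q)`_(size Q).-2 = 0) -> Q %| g.
Proof.
move=> H; apply: contraT => nd.
pose r : {poly F} := g %% Q.
have rn0 : r != 0 by apply: contra nd => /eqP/modp_eq0P.
have ltr : (size r < size Q)%N by rewrite ltn_modp.
have szr : (0 < size r)%N by rewrite size_poly_gt0.
pose n := ((size Q).-1 - size r)%N.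
have := H n; rewrite -modp_mul -/r modp_small; last first.
  rewrite mulrC size_mulXn //; exact: aux1.
have -> : (size Q).-2 = (size (r * 'X^n)).-1.
  by rewrite size_mulXn //; apply: aux2.
rewrite mulrC -/(lead_coef _) lead_coef_Mmonic ?monicXn //.
by move/eqP; rewrite lead_coef_eq0 (negbTE rn0).
Qed.

Lemma dvd_sq {g} : Q %| g -> forall n, (('X^n * g) %% Q)`_(size Q).-2 = 0.
Proof. by move=> /dvdpP [r ->] n; rewrite mulrA modp_mull coef0. Qed.

Lemma sq_period m : (forall n, sq (n + m) = sq n) <-> Q %| 'X^m - 1.
Proof.
have E n : sq (n + m) - sq n = (('X^n * ('X^m - 1)) %% Q)`_(size Q).-2.
  by rewrite mulrBr mulr1 -exprD modpB' coefB.
split=> [H|H n].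
  apply: sq_dvd => n'; by rewrite -E H subrr.
by apply/eqP; rewrite -subr_eq0 E (dvd_sq H).
Qed.

Lemma sq_rec (R : {poly F}) k : R \is monic -> size R = k.+1 -> Q %| R ->
  forall n, sq (n + k) = \sum_(i < k) (- R`_i) * sq (n + i).
Proof.
move=> mR sR dR n.
have := dvd_sq dR n; rewrite sq_mod sR big_ord_recr /=.
have -> : R`_k = 1 by move/monicP: mR; rewrite /lead_coef sR.
rewrite mul1r => /eqP; rewrite addrC addr_eq0 => /eqP ->.
by rewrite -sumrN; apply: eq_bigr => i _; rewrite mulNr.
Qed.
End Seq.
Lemma frobB (R : comNzRingType) (p : nat) (hp : p \in [pchar R]) (x y : R) s :
  (x - y) ^+ (p ^ s) = x ^+ (p ^ s) - y ^+ (p ^ s).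
Proof.
elim: s => [|s IH]; first by rewrite expn0 !expr1.
rewrite expnSr !exprM IH -!(pFrobenius_autE hp) pFrobenius_autB_comm //.
exact: mulrC.
Qed.

Lemma minPoly_size (F : finFieldType) (L : fieldExtType F) (a : L) i :
  (0 < i)%N -> a ^+ (#|F| ^ i) = a -> (size (minPoly 1 a) <= i.+1)%N.
Proof.
move=> i0 ai.
have [p pp hp] := finPcharP F.
have hpL : p \in [pchar L] by rewrite pchar_lalg.
have Eq : #|F| = (p ^ logn p #|F|)%N := card_pprimeChar hp.
pose sg (x : L) := x ^+ #|F|.
have fA : zmod_morphism sg by move=> x y; rewrite /sg Eq frobB.
have fM : monoid_morphism sg by split=> [|x y]; rewrite /sg ?expr1n ?exprMn.
pose sR : {rmorphism L -> L} := HB.pack sg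
  (GRing.isZmodMorphism.Build _ _ sg fA) (GRing.isMonoidMorphism.Build _ _ sg fM).
have sRE x : sR x = x ^+ #|F| by [].
pose s := [seq a ^+ (#|F| ^ j) | j <- iota 0 i].
pose G := \prod_(z <- s) ('X - z%:P).
have shift n m : [seq sR (a ^+ (#|F| ^ j)) | j <- iota m n] = [seq a ^+ (#|F| ^ j) | j <- iota m.+1 n].
  elim: n m => //= n IH m; rewrite IH /sg -exprM -expnSr //.
have sG : map_poly sR G = G.
  rewrite /G rmorph_prod.
  have -> : \prod_(z <- s) map_poly sR ('X - z%:P) = \prod_(z <- map sR s) ('X - z%:P).
    rewrite big_map; apply: eq_bigr => z _.
    by rewrite rmorphB /= (map_polyX sR) (map_polyC sR).
  apply: perm_big.
  case: i i0 ai {G} @s => // i' _ ai.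
  have E1 : iota 1 i'.+1 = rcons (iota 1 i') (1 + i')%N by rewrite -cats1 -(addn1 i') iotaD.
  move=> s; rewrite /s -map_comp /comp (shift i'.+1 0%N) E1 map_rcons add1n ai /=.
  by rewrite expn0 expr1 perm_rcons.
have Gover : G \is a polyOver 1%VS.
  apply/polyOverP => n.
  rewrite Fermat's_little_theorem dimv1 expn1.
  by rewrite -sRE -coef_map sG.
have rG : root G a.
  rewrite root_prod_XsubC; apply/mapP; exists 0%N; last by rewrite expn0 expr1.
  by rewrite mem_iota.
have := minPoly_dvdp Gover rG.
move/dvdp_leq; rewrite size_prod_XsubC size_map size_iota; apply.
by rewrite monic_neq0 // monic_prod_XsubC.
Qed.
Lemma core (L : fieldType) (p : nat) (hp : p \in [pchar L]) (d : nat) (a : L)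
  (ha : d.-primitive_root a) (hd : d%:R != 0 :> L) (M : {poly L})
  (HM : forall m, (M %| 'X^m - 1) = (a ^+ m == 1)) (Ma : root M a)
  (e j : nat) (he : (e <= p ^ j)%N) (he0 : (0 < e)%N)
  (hej : forall j', j = j'.+1 -> (p ^ j' < e)%N) (m : nat) (hm : (0 < m)%N) :
  (M ^+ e %| 'X^m - 1) = (p ^ j * d %| m)%N.
Proof.
have pp := pcharf_prime hp.
have d0 : (0 < d)%N := prim_order_gt0 ha.
have cpd : coprime p d by rewrite prime_coprime // (dvdn_pcharf hp).
have hpP : p \in [pchar {poly L}] by rewrite pchar_poly.
apply/idP/idP.
- move=> H.
  have Hm : M %| 'X^m - 1 := dvdp_trans (dvdp_exp he0 (dvdpp M)) H.
  have Hdm : (d %| m)%N by rewrite (prim_order_dvd ha) -HM.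
  have [m' cpm' Em] := pfactor_coprime pp hm.
  set s := logn p m in Em.
  suff js : (j <= s)%N.
    by rewrite Gauss_dvd ?coprimeXl // Hdm andbT Em dvdn_mull // dvdn_exp2l.
  case: j hej he => [//|j'] hej he.
  rewrite leqNgt; apply/negP => lt.
  have e1 : (p ^ s + 1 <= e)%N.
    have := hej j' erefl.
    have : (p ^ s <= p ^ j')%N by rewrite leq_pexp2l ?prime_gt0.
    lia.
  have dm' : (d %| m')%N.
    by rewrite -(@Gauss_dvdl d m' (p ^ s)) -?Em // coprime_sym coprimeXl.
  have a1 : a ^+ m' = 1 by apply/eqP; rewrite -(prim_order_dvd ha).
  have rt : root ('X^m' - 1) a by rewrite rootE !hornerE a1 subrr.
  set G := ('X^m' - 1) %/ ('X - a%:P).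
  have EG : 'X^m' - 1 = G * ('X - a%:P) by rewrite divpK // dvdp_XsubCl.
  have m'0 : m'%:R != 0 :> L by rewrite -(dvdn_pcharf hp) -prime_coprime.
  have := separable_Xn_sub_1 m'0; rewrite EG separable_root => /andP[_ nG].
  have EX : 'X^m - 1 = (G * ('X - a%:P)) ^+ (p ^ s).
    by rewrite -EG frobB // -exprM -Em expr1n.
  have H2 : ('X - a%:P) ^+ (p ^ s) * ('X - a%:P) %| ('X - a%:P) ^+ (p ^ s) * G ^+ (p ^ s).
    rewrite -exprSr mulrC -exprMn -EX -addn1.
    apply: dvdp_trans H.
    apply: dvdp_trans (dvdp_exp2l M e1).
    by apply: dvdp_exp2r; rewrite dvdp_XsubCl.
  move: H2; rewrite dvdp_mul2l ?expf_neq0 ?polyXsubC_eq0 // dvdp_XsubCl.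
  rewrite rootE horner_exp expf_eq0 => /andP[_ /eqP G0].
  by move: nG; rewrite rootE G0 eqxx.
- move=> /dvdnP[r Er].
  have -> : 'X^m - 1 = ('X^(r * d) - 1) ^+ (p ^ j) :> {poly L}.
    by rewrite frobB // -exprM expr1n Er mulnA mulnAC.
  apply: dvdp_trans (dvdp_exp2l M he) _.
  apply: dvdp_exp2r; rewrite HM mulnC exprM (prim_expr_order ha) expr1n //.
Qed.

Lemma exP (F : finFieldType) (p : nat) (hp : p \in [pchar F]) (i d : nat)
  (i0 : (0 < i)%N) (d0 : (0 < d)%N) (hdr : d%:R != 0 :> F)
  (hd : (d %| #|F| ^ i - 1)%N) :
  exists P : {poly F}, [/\ P \is monic, (1 < size P)%N, (size P <= i.+1)%N,
    P`_0 != 0 &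
    forall e j, (e <= p ^ j)%N -> (0 < e)%N ->
      (forall j', j = j'.+1 -> (p ^ j' < e)%N) ->
      forall m, (0 < m)%N -> (P ^+ e %| 'X^m - 1) = (p ^ j * d %| m)%N].
Proof.
have nz : ('X^d - 1 : {poly F}) != 0 by rewrite -size_poly_gt0 size_Xn_sub_1.
have [L [rs Dp _]] := FinSplittingFieldFor nz.
rewrite rmorphB /= map_polyXn rmorph1 in Dp.
have hdL : d%:R != 0 :> L by rewrite -(rmorph_nat (in_alg L)) fmorph_eq0.
have urs : uniq rs.
  by rewrite -separable_prod_XsubC -(eqp_separable Dp) separable_Xn_sub_1.
have szrs : size rs = d.
  by have := eqp_size Dp; rewrite size_Xn_sub_1 // size_prod_XsubC => -[].
have allrs : all d.-unity_root rs.
  apply/allP => z zr; rewrite /root_of_unity (eqp_root Dp) root_prod_XsubC //.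
have [a _ ha] := hasP (has_prim_root d0 allrs urs (eq_leq (esym szrs))).
have aq : a ^+ (#|F| ^ i) = a.
  have q1 : (0 < #|F| ^ i)%N by rewrite expn_gt0 (ltnW (finNzRing_gt1 F)).
  rewrite -(subnK q1) addn1 exprSr.
  by move/dvdnP: hd => [r ->]; rewrite mulnC exprM (prim_expr_order ha) expr1n mul1r.
have /polyOver1P[P EP] := minPolyOver 1 a.
have HM m : (minPoly 1 a %| 'X^m - 1) = (a ^+ m == 1).
  apply/idP/idP => [H|H].
    by have := root_dvdp H (root_minPoly 1 a); rewrite rootE !hornerE subr_eq0.
  apply: minPoly_dvdp; first by rewrite rpredB ?rpredX ?polyOverX ?rpred1.
  by rewrite rootE !hornerE (eqP H) subrr.
exists P; split.
- by rewrite -(map_monic (in_alg L)) -EP monic_minPoly.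
- by rewrite -(size_map_poly (in_alg L)) -EP size_minPoly.
- by rewrite -(size_map_poly (in_alg L)) -EP minPoly_size.
- rewrite -(fmorph_eq0 (in_alg L)) -coef_map -EP.
  apply/negP => /eqP M0.
  have : root ('X^d - 1) (0 : L).
    apply: root_dvdp (_ : minPoly 1 a %| _) _.
      by rewrite HM (prim_expr_order ha).
    by rewrite rootE horner_coef0 M0.
  by rewrite rootE !hornerE expr0n gtn_eqF // sub0r oppr_eq0 oner_eq0.
- move=> e j he he0 hej m hm.
  rewrite -(dvdp_map (in_alg L)) rmorphXn /= -EP rmorphB /= map_polyXn rmorph1.
  have hpL : p \in [pchar L] by rewrite pchar_lalg.
  exact: (core _ _ hpL _ _ ha hdL _ HM (root_minPoly 1 a) _ _ he he0 hej _ hm).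
Qed.

Theorem theorem3p3 (F : finFieldType) (p : nat) (hp : (p \in [pchar F])%R)
  (k : nat) (hk : (0 < k)%N)
  (i : nat) (hi : (0 < i <= k)%N)
  (t : nat) (ht : (k %/ i <= p ^ t)%N)
  (htmin : forall t' : nat, (k %/ i <= p ^ t')%N -> (t <= t')%N)
  (j : nat) (hj : (j <= t)%N)
  (d : nat) (hd : (d %| #|F| ^ i - 1)%N) :
  in_P k F (p ^ j * d)%N.
Proof.
have /andP[i0 ik] := hi.
have pp := pcharf_prime hp.
have p1 : (1 < p)%N := prime_gt1 pp.
have q1 : (1 < #|F|)%N := finNzRing_gt1 F.
have qi1 : (0 < #|F| ^ i - 1)%N.
  have : (#|F| ^ 1 <= #|F| ^ i)%N by rewrite leq_pexp2l // ltnW.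
  rewrite expn1; lia.
have d0 : (0 < d)%N := dvdn_gt0 qi1 hd.
have hdr : d%:R != 0 :> F.
  rewrite -(dvdn_pcharf hp); apply/negP => pd.
  have Eq : #|F| = (p ^ logn p #|F|)%N := card_pprimeChar hp.
  have lq : (0 < logn p #|F|)%N.
    by move: q1; rewrite {1}Eq; case: (logn p #|F|).
  have pq : (p %| #|F| ^ i)%N.
    by rewrite Eq -expnM dvdn_exp // muln_gt0 lq.
  have : (p %| #|F| ^ i - (#|F| ^ i - 1))%N by rewrite dvdn_sub // (dvdn_trans pd hd).
  have -> : (#|F| ^ i - (#|F| ^ i - 1) = 1)%N by lia.
  by rewrite dvdn1 => /eqP p1'; move: p1; rewrite p1'.
have [P [mP szP1 szPi P0 HP]] := exP _ _ hp _ _ i0 d0 hdr hd.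
pose e := (if j is j'.+1 then p ^ j' + 1 else 1)%N.
have he : (e <= p ^ j)%N.
  rewrite /e; case: (j) => [|j']; first by rewrite expn0.
  have := expn_gt0 p j'; rewrite (ltnW p1) /= expnSr => h; nia.
have he0 : (0 < e)%N by rewrite /e; case: (j) => // j'; rewrite addn1.
have hej : forall j', j = j'.+1 -> (p ^ j' < e)%N by move=> j' Ej; rewrite /e Ej addn1.
have hei : (e * i <= k)%N.
  rewrite /e; case: (j) hj => [|j'] hj'; first by rewrite mul1n.
  have lt : (p ^ j' < k %/ i)%N.
    rewrite ltnNge; apply/negP => /htmin; lia.
  apply: leq_trans (leq_divM k i); rewrite leq_mul2r addn1 lt orbT //.
pose Q := P ^+ e.
have mQ : Q \is monic by rewrite monic_exp.
have Qn0 : Q != 0 by rewrite monic_neq0.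
have szQ : ((size Q).-1 <= k)%N.
  rewrite size_exp; apply: leq_trans hei.
  by rewrite mulnC leq_mul2l -ltnS prednK ?szPi ?orbT // ltnW.
pose R := Q * ('X - 1%:P) ^+ (k - (size Q).-1).
have mR : R \is monic by rewrite monicMl // monic_exp // monicXsubC.
have szR : size R = k.+1.
  rewrite size_Mmonic ?monic_exp ?monicXsubC // size_exp_XsubC.
  have : (0 < size Q)%N by rewrite size_poly_gt0.
  move: szQ; rewrite -!subn1; lia.
have QR : Q %| R by rewrite dvdp_mulIl.
exists (fun x : 'I_k => - R`_x), (@sq _ Q); split; [|split].
- move=> x x0; rewrite x0 oppr_eq0 -horner_coef0 hornerM horner_exp !hornerE.
  by rewrite mulf_neq0 // expf_neq0 // ?horner_coef0 // oppr_eq0 oner_eq0.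
- move=> n; exact: (@sq_rec _ Q R k mR szR QR n).
- have Hper m : (0 < m)%N -> is_period (@sq _ Q) m <-> (p ^ j * d %| m)%N.
    move=> m0; rewrite /is_period -(HP e j he he0 hej m m0) -(@sq_period _ Q Qn0).
    by split => [[]|] //.
  split.
    have m0 : (0 < p ^ j * d)%N by rewrite muln_gt0 d0 expn_gt0 (prime_gt0 pp).
    by apply/(Hper _ m0).
  move=> m' Hm; have m0 := proj1 Hm; apply: (dvdn_leq m0).
  by apply/(Hper m' m0).
Qed.
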